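(* Let $2 \leq k \leq n-2$ be integers, let $F$ be a finite field, and let $E \subset F^n$ be an $(n,k)$ set. Then $\lvert E \rvert \gtrapprox \lvert F \rvert^{\frac{kn+k+1}{k+1}}$; that is, for every $\epsilon>0$ there is a constant $C_\epsilon>0$ independent of $F$ and $E$ such that $\lvert E\rvert \geq C_\epsilon^{-1}\lvert F\rvert^{\frac{kn+k+1}{k+1}-\epsilon}$.
   Context: A set $E\subset F^n$ is an $(n,k)$ set if for every $k$-dimensional linear subspace $\pi$ of $F^n$ there is $x\in F^n$ with $x+\pi\subset E$. $\lvert\cdot\rvert$ denotes cardinality. *)

(* Defs.v *)
From HB Require Import structures.
From mathcomp Require Import all_boot all_order all_algebra all_field.

Set Implicit Arguments.
Unset Strict Implicit.
Unset Printing Implicit Defensive.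
Import GRing.Theory.

Definition nk_set (F : finFieldType) (n k : nat) (E : {set 'rV[F]_n}) : Prop :=
  forall V : {vspace 'rV[F]_n}, \dim V = k ->
    exists x : 'rV[F]_n, forall y : 'rV[F]_n, y \in V -> (x + y)%R \in E.

(* Main.v *)
Require Import Defs.
From HB Require Import structures.
From mathcomp Require Import all_boot all_order all_algebra all_field.
From mathcomp Require Import fingroup abelian.
From mathcomp Require Import zify ring.
Set Implicit Arguments.
Unset Strict Implicit.
Unset Printing Implicit Defensive.
Import GRing.Theory FinRing.Theory.

Section FF.
Local Open Scope ring_scope.
Variable F : finFieldType.

Lemma q_gt1 : (1 < #|F|)%N.
Proof. exact: finNzRing_gt1. Qed.

Lemma natr_card : (#|F|%:R : F) = 0.
Proof.
pose e := exponent [set: F].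
have he: e%:R == 0 :> F by rewrite -zmodXgE expg_exponent // inE.
have /dvdnP [c ->] : (e %| #|F|)%N.
  by rewrite -cardsT; apply: exponent_dvdn.
by rewrite natrM (eqP he) mulr0.
Qed.

Lemma exists_nonunity j : (0 < j)%N -> (j < #|F|.-1)%N ->
  exists a : F, a != 0 /\ a ^+ j != 1.
Proof.
move=> j0 jlt.
set rs := enum (predC1 (0:F)).
have szrs : size rs = #|F|.-1 by rewrite -cardE cardC1.
case: (boolP (all (j.-unity_root) rs)) => [H|].
  have := max_unity_roots j0 H (enum_uniq _).
  by rewrite szrs leqNgt jlt.
case/allPn=> a; rewrite mem_enum => /= a0 Ha.
exists a; split=> //.
by move: Ha; rewrite unity_rootE.
Qed.

Lemma powsum_small j : (0 < j)%N -> (j < #|F|.-1)%N -> \sum_(t : F) t ^+ j = 0.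
Proof.
move=> j0 jlt; have [a [a0 aj]] := exists_nonunity j0 jlt.
have E: \sum_(t : F) t ^+ j = a ^+ j * \sum_(t : F) t ^+ j.
  rewrite mulr_sumr (reindex_inj (mulfI a0)) /=.
  by apply: eq_bigr => t _; rewrite exprMn.
apply/eqP; move: E => /eqP; rewrite -subr_eq0 -{1}[\sum__ _]mul1r -mulrBl.
by rewrite mulf_eq0 subr_eq0 eq_sym (negbTE aj).
Qed.

Lemma powsum_top : \sum_(t : F) t ^+ #|F|.-1 = -1.
Proof.
have q1 := q_gt1.
rewrite (bigD1 0) //= expr0n /=.
have -> : (#|F|.-1 == 0)%N = false by lia.
rewrite add0r.
have -> : \sum_(i : F | i != 0) i ^+ #|F|.-1 = \sum_(i : F | i != 0) 1.
  apply: eq_bigr => t t0.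
  apply: (mulfI t0); rewrite mulr1 -exprS prednK ?expf_card //; lia.
rewrite sumr_const cardC1 /=.
apply/eqP; rewrite -subr_eq0 opprK -(natr_card) -[#|F| in X in _ == X]prednK; last lia.
by rewrite -addn1 natrD.
Qed.

Lemma powsum j : (0 < j)%N -> (j <= (#|F|.-1).*2.-1)%N ->
  \sum_(t : F) t ^+ j = if j == #|F|.-1 then -1 else 0.
Proof.
have q1 := q_gt1.
move=> j0 jle; case: ltngtP => h.
- exact: powsum_small.
- have -> : \sum_(t : F) t ^+ j = \sum_(t : F) t ^+ (j - #|F|.-1).
    apply: eq_bigr => t _.
    have -> : j = ((j - #|F|.-1) - 1 + #|F|)%N by lia.
    rewrite exprD expf_card -exprSr; congr (_ ^+ _); lia.
  apply: powsum_small; lia.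
- by rewrite h powsum_top.
Qed.
Lemma zero_poly (n m N : nat) (e : 'I_N -> {ffun 'I_n -> 'I_m}) (c : 'I_N -> F) :
  injective e -> (m <= #|F|.-1)%N ->
  (forall g : {ffun 'I_n -> F}, \sum_i c i * \prod_l g l ^+ e i l = 0) ->
  forall i, c i = 0.
Proof.
move=> einj mle H i0.
have q1 := q_gt1.
pose b := e i0.
have S : \sum_(g : {ffun 'I_n -> F})
   (\sum_i c i * \prod_l g l ^+ e i l) * \prod_l g l ^+ (#|F|.-1 - b l) = 0.
  by apply: big1 => g _; rewrite H mul0r.
rewrite (eq_bigr (fun g : {ffun 'I_n -> F} => \sum_i c i *
      \prod_l g l ^+ (e i l + (#|F|.-1 - b l)))) in S; last first.
  move=> g _; rewrite mulr_suml; apply: eq_bigr => i _.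
  by rewrite -mulrA -big_split /=; congr (_ * _); apply: eq_bigr => l _; rewrite exprD.
rewrite exchange_big /= in S.
rewrite (eq_bigr (fun i => c i * (if e i == b then (-1) ^+ n else 0))) in S; last first.
  move=> i _; rewrite -mulr_sumr; congr (_ * _).
  rewrite -(bigA_distr_bigA (fun l (t : F) => t ^+ (e i l + (#|F|.-1 - b l)))) /=.
  rewrite (eq_bigr (fun l => if e i l == b l then -1 else 0)); last first.
    move=> l _; rewrite powsum; last 2 first.
    - have := ltn_ord (b l); move: mle q1; set q := #|F|; lia.
    - have := ltn_ord (b l); have := ltn_ord (e i l); move: mle q1; set q := #|F|; lia.
    congr (if _ then _ else _).
    have := ltn_ord (b l); have := ltn_ord (e i l).
    move: mle q1; set q := #|F| => mle q1.
    move=> h1 h2; apply/eqP/eqP => h; [apply: val_inj => /=; lia | rewrite h; lia].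
  case: eqP => [->|ne].
    by rewrite (eq_bigr (fun _ => -1)) ?prodr_const ?card_ord // => l _; rewrite eqxx.
  have [l hl] : exists l, e i l != b l.
    apply/existsP; apply: contraT; rewrite negb_exists => /forallP h.
    by case: ne; apply/ffunP => l; apply/eqP; move: (h l); rewrite negbK.
  by rewrite (bigD1 l) //= (negbTE hl) mul0r.
rewrite (bigD1 i0) //= eqxx big1 ?addr0 in S; last first.
  by move=> i ni; rewrite (inj_eq einj) (negbTE ni) mulr0.
by move: S => /eqP; rewrite mulf_eq0 signr_eq0 orbF => /eqP.
Qed.
Lemma size_prod_lin (n : nat) (a b : 'I_n -> F) (k : 'I_n -> nat) :
  leq (size (\prod_l (a l *: 'X + (b l)%:P) ^+ k l)) (\sum_l k l)%N.+1.
Proof.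
apply: (big_rec2 (fun s (p : {poly F}) => leq (size p) s.+1)).
  by rewrite size_poly1.
move=> l s p _ hp.
apply: (leq_trans (size_polyMleq _ _)).
have h1 : leq (size ((a l *: 'X + (b l)%:P) ^+ k l)) (k l).+1.
  apply: (leq_trans (size_poly_exp_leq _ _)).
  have : leq (size (a l *: 'X + (b l)%:P)) 2.
    apply: (leq_trans (size_polyD _ _)).
    by rewrite geq_max size_polyC (leq_trans (size_scale_leq _ _)) ?size_polyX //; case: (_ != 0).
  move=> h2; rewrite ltnS -[X in (_ <= X)%N]mul1n leq_mul2r; apply/orP; right; lia.
lia.
Qed.

Lemma line_top (n m N : nat) (e : 'I_N -> {ffun 'I_n -> 'I_m}) (u : 'I_N -> F)
  (d : nat) (x v : 'rV[F]_n) :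
  (d < #|F|.-1)%N ->
  (forall i, u i != 0 -> (\sum_l (e i l : nat) <= d)%N) ->
  (forall s : F, \sum_i u i * \prod_l (x 0 l + s * v 0 l) ^+ e i l = 0) ->
  \sum_i (u i * 0 ^+ (d - \sum_l (e i l : nat))) * \prod_l (v 0 l) ^+ e i l = 0.
Proof.
move=> dlt hdeg H.
pose R : {poly F} := \sum_i u i *: (\prod_l (x 0 l *: 'X + (v 0 l)%:P) ^+ e i l
                       * 'X^(d - \sum_l (e i l : nat))).
have szR : leq (size R) d.+1.
  apply: (big_ind (fun p : {poly F} => leq (size p) d.+1)).
  - by rewrite size_poly0.
  - by move=> p r hp hr; apply: (leq_trans (size_polyD _ _)); rewrite geq_max hp hr.
  move=> i _; have [->|ui] := eqVneq (u i) 0; first by rewrite scale0r size_poly0.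
  apply: (leq_trans (size_scale_leq _ _)); apply: (leq_trans (size_polyMleq _ _)).
  have := size_prod_lin (fun l => x 0 l) (fun l => v 0 l) (fun l => e i l).
  rewrite size_polyXn; have := hdeg i ui; lia.
have R0 : R = 0.
  apply: (@roots_geq_poly_eq0 _ _ (enum (predC1 (0:F)))); last 2 first.
  - exact: enum_uniq.
  - rewrite -cardE cardC1; move: dlt szR; set q := #|F|; set sR := size R; lia.
  apply/allP => t; rewrite mem_enum /= => t0; rewrite /root.
  rewrite horner_sum.
  rewrite (eq_bigr (fun i => t ^+ d * (u i * \prod_l (x 0 l + t^-1 * v 0 l) ^+ e i l))).
    by rewrite -mulr_sumr H mulr0.
  move=> i _; have [->|ui] := eqVneq (u i) 0; first by rewrite scale0r horner0 !mul0r mulr0.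
  rewrite hornerZ hornerM horner_prod hornerXn.
  have -> : \prod_l ((x 0 l *: 'X + (v 0 l)%:P) ^+ e i l).[t] =
            t ^+ (\sum_l (e i l : nat)) * \prod_l (x 0 l + t^-1 * v 0 l) ^+ e i l.
    rewrite -prodrXr -big_split /=; apply: eq_bigr => l _.
    rewrite horner_exp hornerD hornerZ hornerX hornerC -exprMn; congr (_ ^+ _).
    by rewrite mulrDr mulrA mulfV // mul1r mulrC.
  have -> : t ^+ d = t ^+ (\sum_l (e i l : nat)) * t ^+ (d - \sum_l (e i l : nat)).
    by rewrite -exprD; congr (_ ^+ _); have := hdeg i ui; lia.
  ring.
transitivity R.[0]; last by rewrite R0 horner0.
rewrite /R horner_sum; apply: eq_bigr => i _.
rewrite hornerZ hornerM horner_prod hornerXn [RHS]mulrA [RHS]mulrAC; congr (_ * _).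
apply: eq_bigr => l _.
by rewrite horner_exp hornerD hornerZ hornerX hornerC mulr0 add0r.
Qed.
Lemma ext_dim (n : nat) (U : {vspace 'rV[F]_n}) (j : nat) :
  (\dim U <= j)%N -> (j <= n)%N -> exists V : {vspace 'rV[F]_n}, (U <= V)%VS /\ \dim V = j.
Proof.
elim: j => [|j IH] hU hj.
  by exists U; split=> //; apply/eqP; rewrite -leqn0.
have [eqU|neU] := eqVneq (\dim U) j.+1; first by exists U.
have [V [UV dV]] := IH (ltac:(lia)) (ltac:(lia)).
have [w _ wV] : exists2 w, w \in fullv & w \notin V.
  apply/subvPn; apply/negP => fV.
  have := dimvS fV; rewrite dimvf dim_matrix; lia.
exists (V + <[w]>)%VS; split; first exact: subv_trans UV (addvSl _ _).
have := dimv_add_leqif V <[w]>.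
have w0 : w != 0 by apply: contraNneq wV => ->; rewrite mem0v.
rewrite dim_vline w0 dV addn1 => -[_ eqc]; apply/eqP; rewrite eqc.
apply/subvP => y /memv_capP [yV /vlineP [c yc]].
rewrite memv0; apply/eqP; subst y.
have [c0|c0] := eqVneq c 0; first by rewrite c0 scale0r.
by move: wV; rewrite -(scalerK c0 w) memvZ.
Qed.

Lemma exists_plane (n k : nat) (v : 'rV[F]_n) : (1 <= k)%N -> (k <= n)%N ->
  exists V : {vspace 'rV[F]_n}, \dim V = k /\ v \in V.
Proof.
move=> k1 kn.
have [V [UV dV]] := @ext_dim n <[v]>%VS k (ltac:(rewrite dim_vline; case: (v != 0) => /=; lia)) kn.
by exists V; split=> //; apply: (subvP _ _ UV); apply: memv_line.
Qed.

Lemma kakeya_bound (n k : nat) (E : {set 'rV[F]_n}) :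
  (1 <= k)%N -> (k <= n)%N -> @nk_set F n k E ->
  (((#|F| - 2) %/ n).+1 ^ n <= #|E|)%N.
Proof.
move=> k1 kn hE.
have q1 := q_gt1.
have n1 : (0 < n)%N by lia.
set m := ((#|F| - 2) %/ n).+1.
have mle : (m <= #|F|.-1)%N.
  rewrite /m; have := leq_div (#|F| - 2) n; move: q1; set q := #|F|; lia.
have degle : forall a : {ffun 'I_n -> 'I_m}, (\sum_l (a l : nat) <= #|F| - 2)%N.
  move=> a; apply: (@leq_trans (\sum_(l < n) (m.-1))).
    by apply: leq_sum => l _; have := ltn_ord (a l); lia.
  rewrite sum_nat_const card_ord /m /= mulnC; exact: leq_divM.
rewrite leqNgt; apply/negP => hlt.
have cardA : #|{ffun 'I_n -> 'I_m}| = (m ^ n)%N by rewrite card_ffun !card_ord.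
pose e := fun i : 'I_#|{ffun 'I_n -> 'I_m}| => (enum_val i : {ffun 'I_n -> 'I_m}).
have einj : injective e := @enum_val_inj _ _.
pose M : 'M[F]_(#|{ffun 'I_n -> 'I_m}|, #|E|) :=
  \matrix_(i, j) \prod_l ((enum_val j : 'rV[F]_n) 0 l) ^+ e i l.
set u := nz_row (kermx M).
have u0 : u != 0.
  rewrite nz_row_eq0 -mxrank_eq0 mxrank_ker.
  have := rank_leq_col M; move: hlt; rewrite -cardA; set r := \rank M; set a := #|{ffun _ -> _}|; lia.
have uM : u *m M = 0 by apply/sub_kermxP; exact: nz_row_sub.
pose P (y : 'rV[F]_n) := \sum_i u 0 i * \prod_l (y 0 l) ^+ e i l.
have PE : forall y, y \in E -> P y = 0.
  move=> y yE; rewrite /P; transitivity ((u *m M) 0 (enum_rank_in yE y)); last by rewrite uM mxE.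
  rewrite mxE; apply: eq_bigr => i _; rewrite mxE.
  by rewrite enum_rankK_in.
have [i1 ui1] : exists i, u 0 i != 0.
  apply/existsP; apply: contraT; rewrite negb_exists => /forallP h.
  have u00 : u = 0 by apply/rowP => i; rewrite mxE; apply/eqP; move: (h i); rewrite negbK.
  by rewrite u00 eqxx in u0.
pose deg i := (\sum_l (e i l : nat))%N.
pose d := \big[maxn/0%N]_(i | u 0 i != 0) deg i.
have degd : forall i, u 0 i != 0 -> (deg i <= d)%N.
  by move=> i ui; apply: leq_bigmax_cond.
have [i0 ui0 di0] : {i0 | i0 \in [pred i | u 0 i != 0] & d = deg i0}.
  apply: eq_bigmax_cond; apply/card_gt0P; by exists i1.
have dlt : (d < #|F|.-1)%N.
  rewrite di0; have := degle (e i0); move: q1; set q := #|F|; rewrite /deg; lia.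
have top : forall v : 'rV[F]_n,
  \sum_i (u 0 i * 0 ^+ (d - deg i)) * \prod_l (v 0 l) ^+ e i l = 0.
  move=> v; have [V [dV vV]] := exists_plane v k1 kn.
  have [x hx] := hE V dV.
  apply: (@line_top n m #|{ffun 'I_n -> 'I_m}| e (fun i => u 0 i) d x v dlt degd).
  move=> s; transitivity (P (x + s *: v)); last exact: PE _ (hx _ (memvZ s vV)).
  by rewrite /P; apply: eq_bigr => i _; congr (_ * _); apply: eq_bigr => l _; rewrite !mxE.
have Z := @zero_poly n m #|{ffun 'I_n -> 'I_m}| e (fun i => u 0 i * 0 ^+ (d - deg i)) einj mle.
have : u 0 i0 * 0 ^+ (d - deg i0) = 0.
  apply: Z => g; transitivity (\sum_i (u 0 i * 0 ^+ (d - deg i)) * \prod_l ((\row_l g l : 'rV[F]_n) 0 l) ^+ e i l); last exact: top.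
  by apply: eq_bigr => i _; congr (_ * _); apply: eq_bigr => l _; rewrite mxE.
rewrite -di0 subnn expr0 mulr1 => h.
by move: ui0; rewrite inE h eqxx.
Qed.
End FF.

Lemma expn_pow a b : expn a b = Nat.pow a b.
Proof. by elim: b => //= b IH; rewrite expnS IH. Qed.

Lemma nat_bound (n k : nat) (F : finFieldType) (E : {set 'rV[F]_n}) :
  (1 <= k)%N -> (k <= n)%N -> @nk_set F n k E ->
  (#|F| ^ n <= (2 * n) ^ n * #|E|)%N.
Proof.
move=> k1 kn hE.
have := kakeya_bound k1 kn hE.
have q1 := q_gt1 F.
set m := ((#|F| - 2) %/ n).+1.
have hm : (#|F| <= 2 * n * m)%N.
  have := divn_eq (#|F| - 2) n; have := ltn_pmod (#|F| - 2) (ltac:(lia) : (0 < n)%N).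
  rewrite /m; move: q1; set q := #|F|; set t := ((q - 2) %/ n)%N; set r := ((q - 2) %% n)%N.
  nia.
move=> hE'; apply: (@leq_trans ((2 * n * m) ^ n)).
  by rewrite leq_exp2r // (leq_trans k1 kn).
by rewrite expnMn leq_mul2l hE' orbT.
Qed.

From Stdlib Require Import Reals.
From Stdlib Require Import Lra.

Theorem mainTheorem2 (n k : nat) :
  (2 <= k)%N -> (k <= n - 2)%N ->
  forall eps : R, (0 < eps)%R ->
  exists C : R, (0 < C)%R /\
    forall (F : finFieldType) (E : {set 'rV[F]_n}),
      @nk_set F n k E ->
      (/ C * Rpower (INR #|F|)
         ((INR k * INR n + INR k + 1) / (INR k + 1) - eps) <= INR #|E|)%R.
Proof.
move=> k2 kn eps eps0.
have k1 : leq 1 k by lia.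
have kn' : leq k n by lia.
have kn1 : leq k.+1 n by lia.
exists (INR (expn (muln 2 n) n)).
have C0 : (0 < INR (expn (muln 2 n) n))%R.
  apply: lt_0_INR; apply/ltP; rewrite expn_gt0; apply/orP; left; lia.
split=> // F E hE.
have q1 := q_gt1 F.
have Q0 : (1 <= INR #|F|)%R by apply: (le_INR 1); apply/leP; lia.
have hN := nat_bound k1 kn' hE.
have ex : ((INR k * INR n + INR k + 1) / (INR k + 1) - eps <= INR n)%R.
  have hk : (INR k + 1 <= INR n)%R.
    rewrite -S_INR; apply: le_INR; apply/leP; exact: kn1.
  have k0 : (0 < INR k + 1)%R by have := pos_INR k; lra.
  suff : ((INR k * INR n + INR k + 1) / (INR k + 1) <= INR n)%R by lra.
  apply: (Rmult_le_reg_r (INR k + 1)) => //.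
  rewrite /Rdiv Rmult_assoc Rinv_l; last lra.
  nra.
apply: Rle_trans (_ : / INR (expn (muln 2 n) n) * INR #|F| ^ n <= _)%R.
  apply: Rmult_le_compat_l; first by left; apply: Rinv_0_lt_compat.
  rewrite -Rpower_pow; last lra.
  by apply: Rle_Rpower.
rewrite -pow_INR -expn_pow.
apply: (Rmult_le_reg_l (INR (expn (muln 2 n) n))) => //.
rewrite -Rmult_assoc Rinv_r; last lra.
rewrite Rmult_1_l -mult_INR; apply: le_INR; apply/leP.
by rewrite -multE in hN.
Qed.
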